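(* Let $N\ge1$ and $L=\sum_{i=0}^N a_i(x)\partial_x^i$ with $a_i(x)=\sum_{j=0}^i a_{i,j}x^j$ complex polynomials, $a_0\equiv0$, and $a_i\equiv 0$ for $i>N$. Suppose there are complex numbers $\lambda_n$ ($n\ge0$, $\lambda_0=0$) and monic polynomials $P_n(x)=\sum_{i=0}^n b_{n,i}x^i$ of degree $n$ such that $\sum_{i=1}^N a_i(x)\partial_x^iP_n(x)=\lambda_nP_n(x)$ for all $n\ge0$, and assume $\lambda_n\notin\{0,\lambda_1,\ldots,\lambda_{n-1}\}$ for all $n\ge1$. Let $\delta_n^{(k)}=\sum_{i=k}^{n}\binom{n}{i}i!\,a_{i,i-k}$ for $0\le k\le n$. Then for every $n\ge0$ and $i=0,1,\ldots,n-1$, $$b_{n,i}=\sum_{(i_1,\ldots,i_k)\in E_n^{(i)}}\ \prod_{s=1}^k\frac{\delta^{(i_s)}_{i+i_1+\cdots+i_s}}{\lambda_n-\lambda_{i+i_1+\cdots+i_{s-1}}},$$ where $E_n^{(i)}=\{(i_1,\ldots,i_k): k\ge1,\ i_1,\ldots,i_k \text{ positive integers},\ i_1+\cdots+i_k=n-i\}$ and $i+i_1+\cdots+i_{s-1}$ is understood as $i$ when $s=1$.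
   Context: $\partial_x^i$ denotes the $i$-th derivative in $x$. Note $\delta^{(k)}_m=0$ whenever $k>N$, since then all $a_{i,i-k}$ with $i\ge k$ vanish. *)

(* Defs.v *)
From HB Require Import structures.
From mathcomp Require Import all_boot all_order all_algebra.
Set Implicit Arguments. Unset Strict Implicit. Unset Printing Implicit Defensive.
Import Order.TTheory GRing.Theory Num.Theory.
Local Open Scope ring_scope.

Definition Lop (C : fieldType) (N : nat) (A : nat -> {poly C}) (p : {poly C}) : {poly C} :=
  \sum_(1 <= i < N.+1) A i * p^`(i).

Definition delta (C : fieldType) (A : nat -> {poly C}) (n k : nat) : C :=
  \sum_(k <= i < n.+1) ('C(n, i) * i`!)%:R * (A i)`_(i - k).

(* Main.v *)
Require Import Defs.
From HB Require Import structures.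
From mathcomp Require Import all_boot all_order all_algebra.
Import Order.TTheory GRing.Theory Num.Theory.
From mathcomp Require Import zify ring lra.
Local Open Scope ring_scope.



Section S.
Variable (C : fieldType) (N : nat) (A : nat -> {poly C}).
Hypothesis hA : forall i, (size (A i) <= i.+1)%N.
Hypothesis hA0 : A 0%N = 0.
Hypothesis hAN : forall i, (N < i)%N -> A i = 0.

Lemma sum_restrict (F : nat -> C) a b K : (b <= K)%N ->
  \sum_(a <= i < b) F i = \sum_(i < K) (if (a <= i < b)%N then F i else 0).
Proof.
move=> bK; rewrite -(big_mkord xpredT (fun i => if (a <= i < b)%N then F i else 0)).
case: (leqP a b) => ab.
  rewrite (@big_cat_nat _ _ _ a 0 K) ?(leq_trans ab bK) //=.
  rewrite (@big_cat_nat _ _ _ b a K) //=.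
  rewrite [X in X + _]big1_seq ?add0r; last first.
    by move=> i /andP[_]; rewrite mem_index_iota => /andP[_ ia]; rewrite leqNgt ia.
  rewrite [X in _ + X]big1_seq ?addr0; last first.
    by move=> i /andP[_]; rewrite mem_index_iota => /andP[bi _]; rewrite ltnNge bi andbF.
  apply: eq_big_seq => i; rewrite mem_index_iota => hi; by rewrite hi.
rewrite (@big_geq _ _ _ a b) ?(ltnW ab) //.
symmetry; apply: big1 => i _; case: ifP => // hh; exfalso; move: hh; lia.
Qed.

Lemma Lop_sum K (c : nat -> C) :
  Lop N A (\sum_(m < K) c m *: 'X^m) = \sum_(m < K) c m *: Lop N A 'X^m.
Proof.
rewrite /Lop; under eq_bigr do rewrite linear_sum mulr_sumr.
rewrite exchange_big; apply: eq_bigr => m _; rewrite scaler_sumr.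
by apply: eq_bigr => i _; rewrite linearZ /= scalerAr.
Qed.

Definition E m j i : C :=
  if (j + i < m)%N then 0 else (A i)`_(j + i - m) *+ m ^_ i.

Lemma Lop_Xn m j : (Lop N A 'X^m)`_j = if (j <= m)%N then delta A m (m - j) else 0.
Proof.
pose K := (N + m).+2.
have -> : (Lop N A 'X^m)`_j = \sum_(i < K) E m j i.
  rewrite /Lop coef_sum (sum_restrict _ _ _ K); last lia.
  apply: eq_bigr => i _; rewrite derivnXn mulrnAr coefMn coefMXn /E.
  case: (leqP i N) => iN; last first.
    by rewrite (hAN i iN) !coef0 !mul0rn; repeat (case: ifP => _); rewrite ?mul0rn.
  move: iN; case: i => [[|i] hi] iN /=.
    by rewrite hA0 coef0 mul0rn; case: ifP.
  rewrite ltnS iN /=.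
  case: (leqP i.+1 m) => im.
    have -> : (j < m - i.+1)%N = (j + i.+1 < m)%N by lia.
    case: ifP => hh; first by rewrite mul0rn. have -> : (j - (m - i.+1) = j + i.+1 - m)%N by move: hh; lia. by [].
  by rewrite ffact_small // !mulr0n; case: ifP.
case: (leqP j m) => jm; last first.
  rewrite big1 // => i _; rewrite /E; case: ifP => // _.
  by rewrite nth_default ?mul0rn //; apply: leq_trans (hA i) _; lia.
rewrite /delta (sum_restrict _ _ _ K); last lia.
apply: eq_bigr => i _; rewrite /E.
case: ifP => h.
  case: ifP => // h2; lia.
case: (leqP i m) => im.
  rewrite ifT; last lia.
  rewrite -bin_ffact mulr_natl; have -> : (j + i - m = i - (m - j))%N by lia. by [].
by rewrite ffact_small // mulr0n; case: ifP => // h2; lia.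
Qed.

Lemma Lop_coef p j : (Lop N A p)`_j =
  \sum_(m < size p) p`_m * (if (j <= m)%N then delta A m (m - j) else 0).
Proof.
rewrite -{1}[p]coefK poly_def Lop_sum coef_sum.
by apply: eq_bigr => m _; rewrite coefZ Lop_Xn.
Qed.

Variable (lam : nat -> C) (P : nat -> {poly C}).
Hypothesis hmon : forall n, P n \is monic.
Hypothesis hsz : forall n, size (P n) = n.+1.
Hypothesis heig : forall n, Lop N A (P n) = lam n *: P n.

Lemma lead1 n : (P n)`_n = 1.
Proof. by have := monicP (hmon n); rewrite /lead_coef hsz. Qed.

Lemma delta0 j : delta A j 0 = lam j.
Proof.
have := Lop_coef (P j) j; rewrite heig coefZ lead1 mulr1 hsz => ->.
rewrite big_ord_recr /= leqnn subnn lead1 mul1r big1 ?add0r // => i _.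
by rewrite leqNgt ltn_ord mulr0.
Qed.

Lemma brec n j : (j <= n)%N ->
  (P n)`_j * (lam n - lam j) =
  \sum_(d < n - j) (P n)`_(j + d.+1) * delta A (j + d.+1) d.+1.
Proof.
move=> jn.
have := Lop_coef (P n) j; rewrite heig coefZ hsz -(big_mkord xpredT (fun m => (P n)`_m * (if (j <= m)%N then delta A m (m - j) else 0))) /=.
rewrite (@big_cat_nat _ _ _ j 0 n.+1) //=; last lia.
rewrite big1_seq ?add0r; last first.
  by move=> i /andP[_]; rewrite mem_index_iota => /andP[_ ij]; rewrite leqNgt ij mulr0.
rewrite (@big_addn _ _ _ 0 n.+1 j).
have -> : (n.+1 - j = (n - j).+1)%N by lia.
rewrite big_nat_recl //= leqnn subnn delta0 add0n => E.
rewrite mulrBr mulrC E [_ * lam j]mulrC addrAC subrr add0r big_mkord.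
apply: eq_bigr => d _; rewrite leq_addl addnC; do 3 f_equal; lia.
Qed.

Hypothesis hlam0 : lam 0%N = 0.
Hypothesis hdist : forall n, (0 < n)%N ->
     lam n != 0 /\ (forall m, (0 < m < n)%N -> lam n != lam m).

Lemma gne0 n i : (i < n)%N -> lam n - lam i != 0.
Proof.
move=> lt; rewrite subr_eq0; have [h1 h2] := hdist n (leq_ltn_trans (leq0n i) lt).
case: i lt => [|i] lt; first by rewrite hlam0.
by apply: h2; rewrite lt.
Qed.

Fixpoint compsF (fuel D : nat) : seq (seq nat) :=
  match fuel with
  | 0 => [:: [::]]
  | fuel'.+1 => if D is 0 then [:: [::]]
                else [seq j :: c | j <- iota 1 D, c <- compsF fuel' (D - j)]
  end.

Lemma compsF_S fuel D : compsF fuel.+1 D.+1 =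
  [seq j :: c | j <- iota 1 D.+1, c <- compsF fuel (D.+1 - j)].
Proof. by []. Qed.

Variable n : nat.

Fixpoint w (i : nat) (c : seq nat) : C :=
  match c with
  | [::] => 1
  | j :: c' => delta A (i + j) j / (lam n - lam i) * w (i + j) c'
  end.

Lemma bsum fuel : forall D i, (D <= fuel)%N -> (i + D = n)%N ->
  (P n)`_i = \sum_(c <- compsF fuel D) w i c.
Proof.
elim: fuel => [|fuel IH] [|D] i //.
- by move=> _; rewrite addn0 => <-; rewrite big_seq1 lead1.
- by move=> _; rewrite addn0 => <-; rewrite big_seq1 lead1.
move=> Dle iD.
rewrite compsF_S big_allpairs_dep.
have in_ : (i < n)%N by lia.
have -> : (P n)`_i = (P n)`_i * (lam n - lam i) / (lam n - lam i).
  by rewrite mulfK // gne0.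
rewrite brec; last lia.
have -> : (n - i = D.+1)%N by lia.
change ((\sum_(d < D.+1) (P n)`_(i + d.+1) * delta A (i + d.+1) d.+1) / (lam n - lam i) =
  \sum_(1 <= j < D.+2) \sum_(c <- compsF fuel (D.+1 - j)) w i (j :: c)).
rewrite big_add1 /= big_mkord mulr_suml; apply: eq_bigr => d _.
have := ltn_ord d => hd.
rewrite (IH (D.+1 - d.+1)%N (i + d.+1)%N); [|lia|lia].
rewrite -mulrA mulr_suml; apply: eq_bigr => c _.
by rewrite mulrC.
Qed.

Lemma sumS k (u : 'I_k.+1 -> nat) (Q : nat -> bool) :
  (\sum_(r < k.+1 | Q r) u r = (if Q 0%N then u ord0 else 0) + \sum_(r < k | Q r.+1) u (lift ord0 r))%N.
Proof.
by rewrite big_mkcond big_ord_recl /= [in RHS]big_mkcond.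
Qed.

Lemma prodw k : forall (u : 'I_k -> nat) i,
  \prod_(s < k) (delta A (i + \sum_(r < k | (r <= s)%N) u r) (u s)
     / (lam n - lam (i + \sum_(r < k | (r < s)%N) u r))) =
  w i [seq u s | s <- enum 'I_k].
Proof.
elim: k => [|k IH] u i; first by rewrite big_ord0 enum_ord0.
rewrite big_ord_recl enum_ordSl /=.
rewrite (sumS _ u (fun x => x <= 0)%N) (sumS _ u (fun x => x < 0)%N) /=.
have e1 : (\sum_(r < k | (r.+1 <= 0)%N) u (lift ord0 r) = 0)%N by rewrite big_pred0.
have e2 : (\sum_(r < k | (r.+1 < 0)%N) u (lift ord0 r) = 0)%N by rewrite big_pred0.
rewrite e1 !addn0 -map_comp; congr (_ * _).
rewrite -(IH (fun r => u (lift ord0 r)) (i + u ord0)%N).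
apply: eq_bigr => s _.
rewrite (sumS _ u (fun x => x <= bump 0 s)%N) (sumS _ u (fun x => x < bump 0 s)%N) /=.
have f1 : (\sum_(r < k | (r < bump 0 s)%N) u (lift ord0 r) = \sum_(r < k | (r <= s)%N) u (lift ord0 r))%N.
  by apply: eq_bigl => r; rewrite /bump /= add1n ltnS.
have f2 : (\sum_(r < k | (r.+1 < bump 0 s)%N) u (lift ord0 r) = \sum_(r < k | (r < s)%N) u (lift ord0 r))%N.
  by apply: eq_bigl => r; rewrite /bump /= add1n ltnS.
by rewrite f1 f2 !addnA.
Qed.

Lemma memF fuel : forall D c, (D <= fuel)%N ->
  (c \in compsF fuel D) = all (fun x => 0 < x)%N c && (sumn c == D).
Proof.
elim: fuel => [|fuel IH] [|D] c hD //.
- by rewrite inE; case: c => [|x c] //=; case: x => [|x] //=; rewrite addSn andbF.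
- by rewrite inE; case: c => [|x c] //=; case: x => [|x] //=; rewrite addSn andbF.
rewrite compsF_S; apply/allpairsPdep/idP.
  move=> [j [c' [jin c'in ->]]]; move: jin; rewrite mem_iota => /andP[j1 j2].
  rewrite IH in c'in; last lia.
  case/andP: c'in => ap /eqP sm /=; rewrite ap j1 /=; apply/eqP; lia.
case: c => [|j c'] //.
case/andP=> /andP[jp ap] /eqP sm; have jp' : (0 < j)%N := jp; exists j, c'; split => //.
  rewrite mem_iota jp' /= add1n ltnS -sm; exact: leq_addr.
rewrite IH; last lia.
apply/andP; split; first exact: ap. by apply/eqP; rewrite -sm /= addKn.
Qed.

Lemma uniqF fuel : forall D, uniq (compsF fuel D).
Proof.
elim: fuel => [|fuel IH] [|D] //.
rewrite compsF_S; apply: allpairs_uniq_dep; first exact: iota_uniq.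
  by move=> j _; apply: IH.
by move=> [j1 c1] [j2 c2] _ _ /= [-> ->].
Qed.

Lemma mem_le_sumn (c : seq nat) x : x \in c -> (x <= sumn c)%N.
Proof.
elim: c => [|y c IH] //=; rewrite inE => /orP[/eqP ->|/IH h]; first exact: leq_addr.
exact: leq_trans h (leq_addl _ _).
Qed.

Lemma nth_h k (u : 'I_k -> nat) (s : 'I_k) : nth 0%N [seq u s | s <- enum 'I_k] s = u s.
Proof. by rewrite (nth_map s) ?size_enum_ord // nth_ord_enum. Qed.

Lemma sumk D k i :
  \sum_(t : {ffun 'I_k -> 'I_D.+1} |
          [forall s, (0 < t s)%N] && (\sum_(s < k) (t s : nat) == D)%N)
    w i [seq (t s : nat) | s <- enum 'I_k] =
  \sum_(c <- compsF D D | size c == k) w i c.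
Proof.
pose h := fun t : {ffun 'I_k -> 'I_D.+1} => [seq (t s : nat) | s <- enum 'I_k].
pose Ap := [pred t : {ffun 'I_k -> 'I_D.+1} |
          [forall s, (0 < t s)%N] && (\sum_(s < k) (t s : nat) == D)%N].
transitivity (\sum_(c <- [seq h t | t in Ap]) w i c).
  by rewrite big_image.
rewrite -[RHS]big_filter; apply: perm_big; apply: uniq_perm.
- rewrite map_inj_in_uniq ?enum_uniq //.
  move=> t1 t2 _ _ eq; apply/ffunP => s; apply/val_inj.
  have := congr1 (fun c => nth 0%N c s) eq.
  by rewrite /= /h !nth_h.
- by apply: filter_uniq; apply: uniqF.
move=> c; rewrite mem_filter memF // andbC.
apply/imageP/andP.
  move=> [t tA ->]; rewrite inE in tA; case/andP: tA => /forallP pos /eqP sm.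
  split; last by rewrite /h size_map size_enum_ord.
  apply/andP; split.
    by apply/allP => x /mapP [s _ ->]; apply: pos.
  apply/eqP; rewrite /h sumnE big_map big_enum /= -[X in _ = X]sm; apply: eq_bigl => s; by rewrite inE.
move=> [/andP[ap /eqP sm] /eqP sz].
have le s : (s < k)%N -> (nth 0 c s < D.+1)%N.
  by move=> hs; rewrite ltnS -sm; apply: mem_le_sumn; apply: mem_nth; rewrite sz.
exists [ffun s : 'I_k => inord (nth 0%N c s) : 'I_D.+1].
  rewrite inE; apply/andP; split.
    apply/forallP => s; rewrite ffunE inordK ?le //.
    by apply: (allP ap); apply: mem_nth; rewrite sz.
  apply/eqP; rewrite -[X in _ = X]sm sumnE (big_nth 0%N) big_mkord sz; apply/eq_bigr => s _.
  by rewrite ffunE inordK ?le.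
apply: (@eq_from_nth _ 0%N); first by rewrite size_map size_enum_ord.
move=> j; rewrite sz => hj.
by rewrite (nth_map (Ordinal hj)) ?size_enum_ord // ffunE inordK nth_enum_ord // le.
Qed.

Lemma sumk_all D (F : seq nat -> C) : (0 < D)%N ->
  \sum_(1 <= k < D.+1) \sum_(c <- compsF D D | size c == k) F c =
  \sum_(c <- compsF D D) F c.
Proof.
move=> D0.
under eq_bigr do rewrite big_mkcond.
rewrite exchange_big /=; apply: eq_big_seq => c.
rewrite memF // => /andP[ap /eqP sm].
have s1 : (1 <= size c)%N by case: c sm ap => //= sm; rewrite -sm in D0.
have s2 : (size c <= D)%N.
  rewrite -sm; elim: c ap {sm s1} => //= x c IH /andP[xp ap].
  by rewrite -add1n leq_add // IH.
rewrite (bigD1_seq (size c)) /= ?mem_index_iota ?iota_uniq ?s1 ?ltnS ?s2 //.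
rewrite eqxx big1 ?addr0 // => k /negbTE; rewrite eq_sym => ->.
by [].
Qed.
End S.

Theorem theorem2 (C : numClosedFieldType) (N : nat) (A : nat -> {poly C})
    (lam : nat -> C) (P : nat -> {poly C}) :
  (1 <= N)%N ->
  (forall i, (size (A i) <= i.+1)%N) ->
  A 0%N = 0 ->
  (forall i, (N < i)%N -> A i = 0) ->
  lam 0%N = 0 ->
  (forall n, P n \is monic) ->
  (forall n, size (P n) = n.+1) ->
  (forall n, Lop N A (P n) = lam n *: P n) ->
  (forall n, (0 < n)%N ->
     lam n != 0 /\ (forall m, (0 < m < n)%N -> lam n != lam m)) ->
  forall n i, (i < n)%N ->
    (P n)`_i =
    \sum_(1 <= k < (n - i).+1)
      \sum_(t : {ffun 'I_k -> 'I_(n - i).+1} |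
              [forall s, (0 < t s)%N] && (\sum_(s < k) (t s : nat) == n - i)%N)
        \prod_(s < k)
          (delta A (i + \sum_(r < k | (r <= s)%N) (t r : nat)) (t s)
           / (lam n - lam (i + \sum_(r < k | (r < s)%N) (t r : nat))%N)).
Proof.
move=> N1 hA hA0 hAN hlam0 hmon hsz heig hdist n i lt.
have D0 : (0 < n - i)%N by lia.
rewrite (@bsum C N A hA hA0 hAN lam P hmon hsz heig hlam0 hdist n (n - i) (n - i) i) //; last lia.
rewrite -(@sumk_all C (n - i) (@w C A lam n i)) //.
apply: eq_bigr => k _.
rewrite -(@sumk C A lam n (n - i) k i).
apply: eq_bigr => t _.
symmetry; exact: (@prodw C A lam n k (fun s => nat_of_ord (t s)) i).
Qed.
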